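(* Let $M$ be an entrywise nonnegative $m\times n$ real matrix and let $M=AW$ with $A\in\mathbb{R}_{\ge0}^{m\times r}$ and $W\in\mathbb{R}_{\ge0}^{r\times n}$. Then there exist $\tilde A\in\mathbb{R}_{\ge0}^{m\times r}$ and $\tilde W\in\mathbb{R}_{\ge0}^{r\times n}$ with $M=\tilde A\tilde W$ such that the factorization $M=\tilde A\tilde W$ is stable.
   Context: Notation: $M_i$ denotes the $i$-th column and $M^j$ the $j$-th row of a matrix $M$; for a set $S$ of column indices, $A_S$ is the submatrix of columns of $A$ indexed by $S$, and for a set $T$ of row indices $W^T$ is the submatrix of rows indexed by $T$. For a matrix $A$ with columns $A_1,\dots,A_r$, let $\mathrm{aff}(A)=\{\sum_i\alpha_iA_i:\alpha_i\ge0\ \forall i\}$ (the set of nonnegative combinations of the columns). Given $A$ ($m\times r$) and $v\in\mathbb{R}^m$, a subset $S\subseteq[r]$ of columns of $A$ is admissible for $v$ if $v\in\mathrm{aff}(A_S)$; analogously, a subset $T\subseteq[r]$ of rows of $W$ is admissible for a row vector $u\in\mathbb{R}^{1\times n}$ if $u$ is a nonnegative combination of the rows of $W^T$. Lexicographic ordering on subsets of $[r]$: if $|S|<|T|$ then $S$ precedes $T$; subsets of equal size are compared by the standard lexicographic order. The support of a vector is the set of indices of its nonzero entries. A factorization $M=AW$ (with $A,W$ nonnegative, inner dimension $r$) is stable if, letting $S_i$ be the lexicographically first subset of columns of $A$ admissible for $M_i$ and $T_j$ the lexicographically first subset of rows of $W$ admissible for $M^j$: (1) for each $i$, $W_i$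 is supported in $S_i$, and (2) for each $j$, the row $A^j$ is supported in $T_j$. *)

(* Defs.v *)
From mathcomp Require Import all_boot all_order all_algebra.
From mathcomp Require Import reals.
Set Implicit Arguments. Unset Strict Implicit. Unset Printing Implicit Defensive.
Import Order.TTheory GRing.Theory Num.Theory.
Local Open Scope ring_scope.

Fixpoint lex_leq (s t : seq nat) : bool :=
  match s, t with
  | [::], _ => true
  | _ :: _, [::] => false
  | x :: s', y :: t' => (x < y)%N || ((x == y) && lex_leq s' t')
  end.

Definition sorted_elems (r : nat) (S : {set 'I_r}) : seq nat :=
  sort leq [seq nat_of_ord i | i <- enum S].

Definition set_lex_le (r : nat) (S T : {set 'I_r}) : bool :=
  (#|S| < #|T|)%N || ((#|S| == #|T|) && lex_leq (sorted_elems S) (sorted_elems T)).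

Definition nonneg_mx (R : realType) (p q : nat) (X : 'M[R]_(p, q)) : Prop :=
  forall i j, 0 <= X i j.

Definition col_admissible (R : realType) (m r : nat) (A : 'M[R]_(m, r))
    (v : 'cV[R]_m) (S : {set 'I_r}) : Prop :=
  exists alpha : 'I_r -> R, (forall k, 0 <= alpha k) /\
    v = \sum_(k in S) alpha k *: col k A.

Definition row_admissible (R : realType) (r n : nat) (W : 'M[R]_(r, n))
    (u : 'rV[R]_n) (T : {set 'I_r}) : Prop :=
  exists beta : 'I_r -> R, (forall k, 0 <= beta k) /\
    u = \sum_(k in T) beta k *: row k W.

Definition lexfirst_col (R : realType) (m r : nat) (A : 'M[R]_(m, r))
    (v : 'cV[R]_m) (S : {set 'I_r}) : Prop :=
  col_admissible A v S /\ forall S', col_admissible A v S' -> set_lex_le S S'.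

Definition lexfirst_row (R : realType) (r n : nat) (W : 'M[R]_(r, n))
    (u : 'rV[R]_n) (T : {set 'I_r}) : Prop :=
  row_admissible W u T /\ forall T', row_admissible W u T' -> set_lex_le T T'.

Definition stable_factorization (R : realType) (m n r : nat)
    (M : 'M[R]_(m, n)) (A : 'M[R]_(m, r)) (W : 'M[R]_(r, n)) : Prop :=
  (forall (i : 'I_n) (S : {set 'I_r}), lexfirst_col A (col i M) S ->
     forall k, W k i != 0 -> k \in S) /\
  (forall (j : 'I_m) (T : {set 'I_r}), lexfirst_row W (row j M) T ->
     forall k, A j k != 0 -> k \in T).

(* Main.v *)
Require Import Defs.
From mathcomp Require Import all_boot all_order all_algebra.
From mathcomp Require Import reals.
From Stdlib Require Import Classical.
Set Implicit Arguments. Unset Strict Implicit. Unset Printing Implicit Defensive.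
Import Order.TTheory GRing.Theory Num.Theory.
Local Open Scope ring_scope.

Lemma lex_leq_refl s : lex_leq s s.
Proof. by elim: s => //= x s ->; rewrite eqxx orbT. Qed.

Lemma lex_leq_trans s t u : lex_leq s t -> lex_leq t u -> lex_leq s u.
Proof.
elim: s t u => [|x s IH] [|y t] [|z u] //=.
move=> /orP[Hxy|/andP[/eqP <- Hst]] /orP[Hyz|/andP[/eqP <- Htu]].
- by rewrite (ltn_trans Hxy Hyz).
- by rewrite Hxy.
- by rewrite Hyz.
- by rewrite eqxx (IH _ _ Hst Htu) orbT.
Qed.

Lemma lex_leq_anti s t : lex_leq s t -> lex_leq t s -> s = t.
Proof.
elim: s t => [|x s IH] [|y t] //=.
move=> /orP[Hxy|/andP[/eqP Exy Hst]] /orP[Hyx|/andP[/eqP Eyx Hts]].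
- by have := ltn_trans Hxy Hyx; rewrite ltnn.
- by move: Hxy; rewrite Eyx ltnn.
- by move: Hyx; rewrite Exy ltnn.
- by rewrite Exy (IH _ Hst Hts).
Qed.

Lemma set_lex_refl r (S : {set 'I_r}) : set_lex_le S S.
Proof. by rewrite /set_lex_le eqxx lex_leq_refl orbT. Qed.

Lemma set_lex_trans r (S T U : {set 'I_r}) :
  set_lex_le S T -> set_lex_le T U -> set_lex_le S U.
Proof.
rewrite /set_lex_le.
move=> /orP[H1|/andP[/eqP E1 L1]] /orP[H2|/andP[/eqP E2 L2]]; apply/orP.
- by left; exact: ltn_trans H1 H2.
- by left; rewrite -E2.
- by left; rewrite E1.
- by right; rewrite E1 E2 eqxx (lex_leq_trans L1 L2).
Qed.

Lemma set_lex_anti r (S T : {set 'I_r}) :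
  set_lex_le S T -> set_lex_le T S -> S = T.
Proof.
rewrite /set_lex_le.
move=> /orP[H1|/andP[/eqP E1 L1]] /orP[H2|/andP[/eqP E2 L2]].
- by have := ltn_trans H1 H2; rewrite ltnn.
- by move: H1; rewrite E2 ltnn.
- by move: H2; rewrite E1 ltnn.
have E := lex_leq_anti L1 L2.
apply/setP => x.
have : (val x \in sorted_elems S) = (val x \in sorted_elems T) by rewrite E.
by rewrite /sorted_elems !mem_sort !(mem_map val_inj) !mem_enum.
Qed.

Lemma set_lex_card r (S T : {set 'I_r}) : set_lex_le S T -> (#|S| <= #|T|)%N.
Proof. by case/orP => [/ltnW|/andP[/eqP -> _]]. Qed.

Definition rk r (S : {set 'I_r}) : nat := #|[set T : {set 'I_r} | set_lex_le T S]|.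

Lemma rk_lt r (S T : {set 'I_r}) : set_lex_le S T -> S != T -> (rk S < rk T)%N.
Proof.
move=> HST neq; rewrite /rk; apply: proper_card; apply/properP; split.
  by apply/subsetP => U; rewrite !inE => H; exact: set_lex_trans H HST.
exists T; rewrite !inE ?set_lex_refl //.
apply/negP => HTS; move/negP: neq; apply; by rewrite (set_lex_anti HST HTS).
Qed.

Lemma sum_lt1 k (F G : 'I_k -> nat) i :
  (forall l, l != i -> F l = G l) -> (F i < G i)%N ->
  (\sum_l F l < \sum_l G l)%N.
Proof.
move=> EF Hi.
rewrite (bigD1 i) //= [X in (_ < X)%N](bigD1 i) //=.
rewrite (eq_bigr (fun l => G l)); last by move=> l /EF.
by rewrite ltn_add2r.
Qed.

Definition colsupp (R : realType) r n (W : 'M[R]_(r, n)) (l : 'I_n) : {set 'I_r} :=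
  [set k | W k l != 0].
Definition rowsupp (R : realType) m r (A : 'M[R]_(m, r)) (j : 'I_m) : {set 'I_r} :=
  [set k | A j k != 0].
Definition pot (R : realType) m n r (A : 'M[R]_(m, r)) (W : 'M[R]_(r, n)) : nat :=
  (\sum_l rk (colsupp W l) + \sum_j rk (rowsupp A j))%N.

Lemma col_mul (R : realType) m n r (A : 'M[R]_(m, r)) (W : 'M[R]_(r, n)) i :
  col i (A *m W) = \sum_k W k i *: col k A.
Proof.
apply/matrixP => a b; rewrite !mxE summxE; apply: eq_bigr => k _.
by rewrite !mxE mulrC.
Qed.

Lemma row_mul (R : realType) m n r (A : 'M[R]_(m, r)) (W : 'M[R]_(r, n)) j :
  row j (A *m W) = \sum_k A j k *: row k W.
Proof.
apply/matrixP => a b; rewrite !mxE summxE; apply: eq_bigr => k _.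
by rewrite !mxE.
Qed.

Lemma sum_restrict (R : realType) r p q (X : {set 'I_r}) (c : 'I_r -> R)
   (v : 'I_r -> 'M[R]_(p, q)) :
  \sum_(k in X) c k *: v k = \sum_(k in [set k in X | c k != 0]) c k *: v k.
Proof.
rewrite [RHS]big_mkcond [LHS]big_mkcond; apply: eq_bigr => k _.
rewrite inE; case: (k \in X) => //=; case: eqP => [->|] //.
by rewrite scale0r.
Qed.

Lemma sum_restrictT (R : realType) r p q (c : 'I_r -> R)
   (v : 'I_r -> 'M[R]_(p, q)) :
  \sum_k c k *: v k = \sum_(k in [set k | c k != 0]) c k *: v k.
Proof.
rewrite [RHS]big_mkcond; apply: eq_bigr => k _.
rewrite inE; case: eqP => [->|] //.
by rewrite scale0r.
Qed.

Lemma step_col (R : realType) m n r (M : 'M[R]_(m, n)) (At : 'M[R]_(m, r))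
  (Wt : 'M[R]_(r, n)) i S k :
  nonneg_mx Wt -> M = At *m Wt -> lexfirst_col At (col i M) S ->
  Wt k i != 0 -> k \notin S ->
  exists Wt', [/\ nonneg_mx Wt', M = At *m Wt' & (pot At Wt' < pot At Wt)%N].
Proof.
move=> nnW HM [[alpha [a0 Halpha]] Hmin] Hk HkS.
pose Wt' := \matrix_(a, l) if l == i then (if a \in S then alpha a else 0)
                          else Wt a l.
exists Wt'; split.
- move=> a l; rewrite mxE; case: (l == i) => //; case: (a \in S) => //.
- apply/matrixP => a l; rewrite !mxE.
  case: (eqVneq l i) => [->|Hli].
    have := congr1 (fun v : 'cV[R]_m => v a 0) Halpha.
    rewrite !mxE summxE => ->.
    rewrite big_mkcond /=; apply: eq_bigr => b _.
    by rewrite !mxE eqxx; case: ifP => _; rewrite ?mulr0 // mulrC.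
  rewrite HM mxE; apply: eq_bigr => b _.
  by rewrite mxE (negbTE Hli).
- rewrite /pot ltn_add2r; apply: (@sum_lt1 _ (fun l => rk (colsupp Wt' l)) (fun l => rk (colsupp Wt l)) i).
    move=> l Hli; congr rk; apply/setP => b; rewrite !inE mxE (negbTE Hli) //.
  have E0 : colsupp Wt' i = [set b in S | alpha b != 0].
    apply/setP => b; rewrite !inE mxE eqxx; by case: (b \in S); rewrite ?eqxx.
  have Hadm0 : col_admissible At (col i M) [set b in S | alpha b != 0].
    by exists alpha; split => //; rewrite Halpha sum_restrict.
  have HS0 : [set b in S | alpha b != 0] = S.
    apply/eqP; rewrite eqEcard; apply/andP; split.
      by apply/subsetP => b; rewrite inE => /andP[].
    exact: set_lex_card (Hmin _ Hadm0).
  have HadmW : col_admissible At (col i M) (colsupp Wt i).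
    exists (fun b => Wt b i); split; first by move=> b; exact: nnW.
    by rewrite HM col_mul sum_restrictT.
  rewrite E0 HS0; apply: rk_lt; first exact: Hmin.
  apply/negP => /eqP ES; move: HkS; by rewrite ES inE Hk.
Qed.

Lemma step_row (R : realType) m n r (M : 'M[R]_(m, n)) (At : 'M[R]_(m, r))
  (Wt : 'M[R]_(r, n)) j T k :
  nonneg_mx At -> M = At *m Wt -> lexfirst_row Wt (row j M) T ->
  At j k != 0 -> k \notin T ->
  exists At', [/\ nonneg_mx At', M = At' *m Wt & (pot At' Wt < pot At Wt)%N].
Proof.
move=> nnA HM [[beta [b0 Hbeta]] Hmin] Hk HkT.
pose At' := \matrix_(a, l) if a == j then (if l \in T then beta l else 0)
                          else At a l.
exists At'; split.
- move=> a l; rewrite mxE; case: (a == j) => //; case: (l \in T) => //.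
- apply/matrixP => a l; rewrite !mxE.
  case: (eqVneq a j) => [->|Haj].
    have := congr1 (fun v : 'rV[R]_n => v 0 l) Hbeta.
    rewrite !mxE summxE => ->.
    rewrite big_mkcond /=; apply: eq_bigr => b _.
    by rewrite !mxE eqxx; case: ifP => _; rewrite ?mul0r.
  rewrite HM mxE; apply: eq_bigr => b _.
  by rewrite mxE (negbTE Haj).
- rewrite /pot ltn_add2l; apply: (@sum_lt1 _ (fun l => rk (rowsupp At' l)) (fun l => rk (rowsupp At l)) j).
    move=> l Hlj; congr rk; apply/setP => b; rewrite !inE mxE (negbTE Hlj) //.
  have E0 : rowsupp At' j = [set b in T | beta b != 0].
    apply/setP => b; rewrite !inE mxE eqxx; by case: (b \in T); rewrite ?eqxx.
  have Hadm0 : row_admissible Wt (row j M) [set b in T | beta b != 0].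
    by exists beta; split => //; rewrite Hbeta sum_restrict.
  have HT0 : [set b in T | beta b != 0] = T.
    apply/eqP; rewrite eqEcard; apply/andP; split.
      by apply/subsetP => b; rewrite inE => /andP[].
    exact: set_lex_card (Hmin _ Hadm0).
  have HadmA : row_admissible Wt (row j M) (rowsupp At j).
    exists (fun b => At j b); split; first by move=> b; exact: nnA.
    by rewrite HM row_mul sum_restrictT.
  rewrite E0 HT0; apply: rk_lt; first exact: Hmin.
  apply/negP => /eqP ET; move: HkT; by rewrite ET inE Hk.
Qed.

Lemma main_ind (R : realType) (m n r : nat) (M : 'M[R]_(m, n)) N :
  forall (A : 'M[R]_(m, r)) (W : 'M[R]_(r, n)), (pot A W < N)%N ->
  nonneg_mx A -> nonneg_mx W -> M = A *m W ->
  exists (At : 'M[R]_(m, r)) (Wt : 'M[R]_(r, n)),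
    [/\ nonneg_mx At, nonneg_mx Wt, M = At *m Wt &
        stable_factorization M At Wt].
Proof.
elim: N => [//|N IH] A W Hp nnA nnW HM.
apply: NNPP; move=> Hno; apply: (Hno); exists A, W; split; [exact: nnA|exact: nnW|exact: HM|split].
- move=> i S HS k Hk; case: (boolP (k \in S)) => // HkS; exfalso.
  have [W' [nnW' HM' Hlt]] := step_col nnW HM HS Hk HkS.
  apply: Hno; apply: (IH A W' _ nnA nnW' HM').
  exact: leq_trans Hlt Hp.
- move=> j T HT k Hk; case: (boolP (k \in T)) => // HkT; exfalso.
  have [A' [nnA' HM' Hlt]] := step_row nnA HM HT Hk HkT.
  apply: Hno; apply: (IH A' W _ nnA' nnW HM').
  exact: leq_trans Hlt Hp.
Qed.

Theorem mainTheorem3 (R : realType) (m n r : nat)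
    (M : 'M[R]_(m, n)) (A : 'M[R]_(m, r)) (W : 'M[R]_(r, n)) :
  nonneg_mx M -> nonneg_mx A -> nonneg_mx W -> M = A *m W ->
  exists (At : 'M[R]_(m, r)) (Wt : 'M[R]_(r, n)),
    [/\ nonneg_mx At, nonneg_mx Wt, M = At *m Wt &
        stable_factorization M At Wt].
Proof.
move=> _ nnA nnW HM.
exact: (@main_ind R m n r M (pot A W).+1 A W (ltnSn _) nnA nnW HM).
Qed.
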